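(* Let $(R,\mathfrak{m})$ be a one-dimensional Cohen–Macaulay local ring. Let $I$ be a regular trace ideal with a principal reduction $(x)$, and let $J$ be a trace ideal with $I\subseteq J\subseteq\bar I$. If $J$ is stable, then $I=J$.
   Context: An ideal is regular if it contains a nonzerodivisor. A principal reduction of $I$ is a principal ideal $(x)\subseteq I$ with $xI^n=I^{n+1}$ for some $n$. For an $R$-module $N$, $\operatorname{tr}(N)$ is the image of $N\otimes_R\operatorname{Hom}_R(N,R)\to R$; an ideal is a trace ideal if it equals $\operatorname{tr}(N)$ for some $N$. $\bar I$ is the integral closure of $I$. $Q(R)$ is the total quotient ring; for a regular ideal $J$, $B_R(J)=\bigcup_{n>0}(J^n:_{Q(R)}J^n)$, and $J$ is stable if $B_R(J)=J:_{Q(R)}J$. *)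

(* Defs.v *)
From HB Require Import structures.
From mathcomp Require Import all_boot all_order all_algebra.
Set Implicit Arguments. Unset Strict Implicit. Unset Printing Implicit Defensive.
Import Order.TTheory GRing.Theory.
Local Open Scope ring_scope.

Section CommAlg.
Variable R : comNzRingType.

Definition is_ideal (I : R -> Prop) : Prop :=
  [/\ I 0, (forall a b, I a -> I b -> I (a + b)) & (forall r a, I a -> I (r * a))].

Definition gen (S : R -> Prop) : R -> Prop :=
  fun r => forall I, is_ideal I -> (forall s, S s -> I s) -> I r.

Definition same_ideal (I J : R -> Prop) : Prop := forall r, I r <-> J r.
Definition subideal (I J : R -> Prop) : Prop := forall r, I r -> J r.

Fixpoint idpow (I : R -> Prop) (n : nat) : R -> Prop :=
  match n with
  | 0 => fun _ => True
  | n'.+1 => gen (fun r => exists a b, idpow I n' a /\ I b /\ r = a * b)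
  end.

Definition nzd (x : R) : Prop := forall y, x * y = 0 -> y = 0.

Definition regular_ideal (I : R -> Prop) : Prop := exists x, I x /\ nzd x.

Definition is_prime (P : R -> Prop) : Prop :=
  [/\ is_ideal P, ~ P 1 & forall a b, P (a * b) -> P a \/ P b].

Definition is_maximal (M : R -> Prop) : Prop :=
  [/\ is_ideal M, ~ M 1 &
      forall I, is_ideal I -> subideal M I -> same_ideal I M \/ I 1].

Definition local_with (m : R -> Prop) : Prop :=
  is_maximal m /\ forall M, is_maximal M -> same_ideal M m.

Definition noetherian : Prop :=
  forall I, is_ideal I -> exists s : seq R, same_ideal I (gen (fun r => r \in s)).

Definition prime_chain (p : nat -> R -> Prop) (n : nat) : Prop :=
  (forall i, (i <= n)%N -> is_prime (p i)) /\
  (forall i, (i < n)%N -> subideal (p i) (p i.+1) /\ exists r, p i.+1 r /\ ~ p i r).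

Definition krull_dim_eq (d : nat) : Prop :=
  (exists p, prime_chain p d) /\ ~ (exists p, prime_chain p d.+1).

Definition regular_seq (m : R -> Prop) (xs : seq R) : Prop :=
  (forall x, x \in xs -> m x) /\
  (forall i, (i < size xs)%N ->
     let P := gen (fun r => r \in take i xs) in
     forall y, P (nth 0 xs i * y) -> P y) /\
  ~ gen (fun r => r \in xs) 1.

(* Cohen-Macaulay local ring with maximal ideal m: Noetherian local and
   depth = dim, i.e. there is a regular sequence in m of length dim R
   (depth <= dim always holds) *)
Definition CM_local (m : R -> Prop) : Prop :=
  noetherian /\ local_with m /\
  exists d, krull_dim_eq d /\ exists xs, size xs = d /\ regular_seq m xs.

Definition principal_reduction (x : R) (I : R -> Prop) : Prop :=
  I x /\ exists n, same_ideal (idpow I n.+1) (fun r => exists y, idpow I n y /\ r = x * y).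

(* trace of a module N: image of N (x) Hom_R(N,R) -> R, i.e. the ideal
   generated by all f(n), f : N -> R linear, n in N *)
Definition trace_of (N : lmodType R) : R -> Prop :=
  gen (fun r => exists (f : {linear N -> R^o}) (n : N), r = f n).

Definition trace_ideal (I : R -> Prop) : Prop :=
  exists N : lmodType R, same_ideal I (trace_of N).

Definition int_closure (I : R -> Prop) : R -> Prop :=
  fun r => exists (n : nat) (a : nat -> R), (0 < n)%N /\
    (forall i, (1 <= i <= n)%N -> idpow I i (a i)) /\
    r ^+ n + \sum_(1 <= i < n.+1) a i * r ^+ (n - i) = 0.

(* Elements of Q(R) are fractions a/s with s a nonzerodivisor.
   (a/s) J^n subset J^n  iff  for all y in J^n, a y = s z for some z in J^n. *)
Definition colon_frac (J : R -> Prop) (n : nat) (a s : R) : Prop :=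
  forall y, idpow J n y -> exists z, idpow J n z /\ a * y = s * z.

(* J stable: B_R(J) = \bigcup_{n>0} (J^n :_Q J^n) equals J :_Q J *)
Definition stable (J : R -> Prop) : Prop :=
  forall a s, nzd s ->
    ((exists n, (0 < n)%N /\ colon_frac J n a s) <-> colon_frac J 1 a s).

End CommAlg.

(* Main.v *)
From HB Require Import structures.
Require Import Defs.
From mathcomp Require Import all_boot all_order all_algebra.
From mathcomp Require Import ring zify.
Set Implicit Arguments. Unset Strict Implicit. Unset Printing Implicit Defensive.
Import GRing.Theory.
Local Open Scope ring_scope.

Lemma gen_ideal {R : comNzRingType} (S : R -> Prop) : is_ideal (gen S).
Proof.
split.
- by move=> I [H0 _ _] _.
- by move=> a b Ha Hb I HI HS; case: (HI) => _ HD _; apply: HD; [apply: Ha|apply: Hb].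
- by move=> r a Ha I HI HS; case: (HI) => _ _ HM; apply: HM; apply: Ha.
Qed.

Lemma gen_in {R : comNzRingType} (S : R -> Prop) s : S s -> gen S s.
Proof. by move=> Hs I _ HS; apply: HS. Qed.

Lemma gen_sub {R : comNzRingType} (S T : R -> Prop) :
  is_ideal T -> (forall s, S s -> T s) -> subideal (gen S) T.
Proof. by move=> HT HS r Hr; apply: Hr. Qed.

Lemma id0 {R : comNzRingType} (T : R -> Prop) : is_ideal T -> T 0.
Proof. by case. Qed.
Lemma idD {R : comNzRingType} (T : R -> Prop) a b : is_ideal T -> T a -> T b -> T (a + b).
Proof. by case=> _ H _; apply: H. Qed.
Lemma idM {R : comNzRingType} (T : R -> Prop) r a : is_ideal T -> T a -> T (r * a).
Proof. by case=> _ _ H; apply: H. Qed.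
Lemma idMr {R : comNzRingType} (T : R -> Prop) r a : is_ideal T -> T a -> T (a * r).
Proof. by move=> HT Ha; rewrite mulrC; apply: idM. Qed.
Lemma idN {R : comNzRingType} (T : R -> Prop) a : is_ideal T -> T a -> T (- a).
Proof. by move=> HT Ha; rewrite -mulN1r; apply: idM. Qed.

Lemma gen_ext_l {R : comNzRingType} (S B T : R -> Prop) :
  is_ideal T -> (forall u v, S u -> B v -> T (u * v)) ->
  forall u v, gen S u -> B v -> T (u * v).
Proof.
move=> HT H u v Hu Hv; apply: (Hu (fun a => T (a * v))).
- split; first by rewrite mul0r; apply: id0.
  + by move=> a b Ha Hb; rewrite mulrDl; apply: idD.
  + by move=> r a Ha; rewrite -mulrA; apply: idM.
- by move=> s Hs; apply: H.
Qed.

Lemma gen_ext_r {R : comNzRingType} (S B T : R -> Prop) :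
  is_ideal T -> (forall u v, B u -> S v -> T (u * v)) ->
  forall u v, B u -> gen S v -> T (u * v).
Proof.
move=> HT H u v Hu Hv; rewrite mulrC; apply: (gen_ext_l (B:=B) HT _ Hv Hu).
by move=> a b Ha Hb; rewrite mulrC; apply: H.
Qed.

Definition mulid {R : comNzRingType} (A B : R -> Prop) : R -> Prop :=
  gen (fun r => exists a b, A a /\ B b /\ r = a * b).

Lemma mulid_in {R : comNzRingType} (A B : R -> Prop) a b :
  A a -> B b -> mulid A B (a * b).
Proof. by move=> Ha Hb; apply: gen_in; exists a, b. Qed.

Lemma mulid_mono {R : comNzRingType} (A A' B B' : R -> Prop) :
  subideal A A' -> subideal B B' -> subideal (mulid A B) (mulid A' B').
Proof.
move=> HA HB; apply: gen_sub; first exact: gen_ideal.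
by move=> s [a [b [Ha [Hb ->]]]]; apply: mulid_in; [apply: HA|apply: HB].
Qed.

Lemma idpow_ideal {R : comNzRingType} (L : R -> Prop) n : is_ideal (idpow L n).
Proof. by case: n => [|n] /=; [split|apply: gen_ideal]. Qed.

Lemma idpowS {R : comNzRingType} (L : R -> Prop) n a b :
  idpow L n a -> L b -> idpow L n.+1 (a * b).
Proof. by move=> Ha Hb; apply: gen_in; exists a, b. Qed.

Lemma idpow1 {R : comNzRingType} (L : R -> Prop) y : is_ideal L -> (L y <-> idpow L 1 y).
Proof.
move=> HL; split.
- by move=> Hy; rewrite -(mul1r y); apply: idpowS.
- apply: gen_sub => // s [a [b [_ [Hb ->]]]]; exact: idM.
Qed.

Lemma idpow_mono {R : comNzRingType} (L L' : R -> Prop) n :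
  subideal L L' -> subideal (idpow L n) (idpow L' n).
Proof.
move=> HL; elim: n => [|n IH] //=.
apply: gen_sub; first exact: gen_ideal.
by move=> s [a [b [Ha [Hb ->]]]]; apply: idpowS; [apply: IH|apply: HL].
Qed.

Lemma idpow_mul {R : comNzRingType} (L : R -> Prop) a b u v :
  idpow L a u -> idpow L b v -> idpow L (a + b) (u * v).
Proof.
elim: b u v => [|b IH] u v Hu Hv.
  by rewrite addn0; apply: idMr => //; apply: idpow_ideal.
rewrite addnS; apply: (gen_ext_r (idpow_ideal _ _) _ Hu Hv).
move=> u' v' Hu' [c [d [Hc [Hd ->]]]].
by rewrite mulrA; apply: idpowS => //; apply: IH.
Qed.

Lemma idpow_pow {R : comNzRingType} (L : R -> Prop) s b :
  L s -> idpow L b (s ^+ b).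
Proof.
move=> Hs; elim: b => [|b IH] //=.
by rewrite exprSr; apply: idpowS.
Qed.

Lemma M_mul {R : comNzRingType} (I L : R -> Prop) a b u v :
  mulid (idpow L a) I u -> idpow L b v -> mulid (idpow L (a + b)) I (u * v).
Proof.
move=> Hu Hv; apply: (gen_ext_l (gen_ideal _) _ Hu Hv).
move=> u' v' [e [i [He [Hi ->]]]] Hv'.
have -> : e * i * v' = (e * v') * i by ring.
by apply: mulid_in => //; apply: idpow_mul.
Qed.

Definition ext {R : comNzRingType} (L : R -> Prop) (s : R) : R -> Prop :=
  fun r => exists l t, L l /\ r = l + t * s.

Lemma ext_ideal {R : comNzRingType} (L : R -> Prop) s : is_ideal L -> is_ideal (ext L s).
Proof.
move=> HL; split.
- by exists 0, 0; split; [apply: id0|ring].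
- move=> a b [l1 [t1 [H1 ->]]] [l2 [t2 [H2 ->]]].
  by exists (l1 + l2), (t1 + t2); split; [apply: idD|ring].
- move=> r a [l1 [t1 [H1 ->]]].
  by exists (r * l1), (r * t1); split; [apply: idM|ring].
Qed.

Lemma ext_sub {R : comNzRingType} (L : R -> Prop) s : is_ideal L -> subideal L (ext L s).
Proof. by move=> HL l Hl; exists l, 0; split => //; ring. Qed.

Lemma ext_s {R : comNzRingType} (L : R -> Prop) s : is_ideal L -> ext L s s.
Proof. by move=> HL; exists 0, 1; split; [apply: id0|ring]. Qed.

Definition G {R : comNzRingType} (L : R -> Prop) (s : R) (n : nat) : R -> Prop :=
  gen (fun r => exists b y, (b <= n)%N /\ idpow L (n - b) y /\ r = y * s ^+ b).

Lemma expand {R : comNzRingType} (L : R -> Prop) s n :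
  is_ideal L -> subideal (idpow (ext L s) n) (G L s n).
Proof.
move=> HL; elim: n => [|n IH].
  by move=> r _; apply: gen_in; exists 0%N, r; split => //; rewrite expr0 mulr1.
apply: gen_sub; first exact: gen_ideal.
move=> r [a [w [Ha [Hw ->]]]].
apply: (gen_ext_l (T := G L s n.+1) (B := ext L s) (gen_ideal _) _ (IH _ Ha) Hw).
move=> u v [b [y [Hb [Hy ->]]]] [l [t [Hl ->]]].
have -> : y * s ^+ b * (l + t * s) = (y * l) * s ^+ b + t * (y * s ^+ b.+1)
  by rewrite exprS; ring.
apply: (idD (gen_ideal _)).
  apply: gen_in; exists b, (y * l); split; first by lia.
  split => //. have -> : (n.+1 - b = (n - b).+1)%N by lia.
  exact: idpowS.
apply: (idM _ (gen_ideal _)).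
apply: gen_in; exists b.+1, y; split; first by lia.
by rewrite subSS.
Qed.

Lemma powM {R : comNzRingType} (I L : R -> Prop) p :
  subideal (idpow L p.+1) (mulid (idpow L p) I) ->
  forall c, subideal (idpow L (p.+1 + c)) (mulid (idpow L (p + c)) I).
Proof.
move=> H; elim=> [|c IH]; first by rewrite !addn0.
rewrite !addnS; apply: gen_sub; first exact: gen_ideal.
move=> r [a [d [Ha [Hd ->]]]].
have Hd1 : idpow L 1 d by rewrite -(mul1r d); apply: idpowS.
have := M_mul (IH _ Ha) Hd1.
by rewrite addn1.
Qed.

Lemma step {R : comNzRingType} (I L : R -> Prop) s k (a : nat -> R) p :
  is_ideal L -> subideal I L -> (0 < k)%N ->
  (forall i, (1 <= i <= k)%N -> idpow I i (a i)) ->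
  s ^+ k + \sum_(1 <= i < k.+1) a i * s ^+ (k - i) = 0 ->
  subideal (idpow L p.+1) (mulid (idpow L p) I) ->
  subideal (idpow (ext L s) (p + k).+1) (mulid (idpow (ext L s) (p + k)) I).
Proof.
move=> HL HIL Hk Ha Heq H.
set L' := ext L s.
have HL' : is_ideal L' by apply: ext_ideal.
have HLL' : subideal L L' by apply: ext_sub.
have Hs : L' s by apply: ext_s.
have Hsk : mulid (idpow L' k.-1) I (s ^+ k).
  have -> : s ^+ k = - \sum_(1 <= i < k.+1) a i * s ^+ (k - i).
    by apply/eqP; rewrite -addr_eq0 Heq.
  apply: (idN (gen_ideal _)).
  rewrite big_nat_cond.
  apply: (big_ind (fun r => mulid (idpow L' k.-1) I r)).
  - exact: (id0 (gen_ideal _)).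
  - by move=> u v Hu Hv; apply: (idD (gen_ideal _)).
  move=> i /andP [/andP [Hi1 Hi2] _].
  have Hai := Ha i (ltac:(lia)).
  have Hai' : mulid (idpow L' i.-1) I (a i).
    move: Hai; case: i Hi1 Hi2 => [|i] // _ _ /=.
    apply: mulid_mono => //; apply: idpow_mono => y Hy.
    by apply: HLL'; apply: HIL.
  have := M_mul Hai' (idpow_pow (k - i) Hs).
  by have -> : (i.-1 + (k - i) = k.-1)%N by lia.
move=> r Hr; have := expand HL Hr.
apply: gen_sub; first exact: gen_ideal.
move=> u [b [y [Hb [Hy ->]]]].
case: (ltnP b k) => Hbk.
- have Hy' : idpow L (p.+1 + (k - b)) y.
    by have <- : ((p + k).+1 - b = p.+1 + (k - b))%N by lia.
  have Hy2 := powM H Hy'.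
  have Hy3 : mulid (idpow L' (p + (k - b))) I y.
    by apply: (mulid_mono _ _ Hy2) => //; apply: idpow_mono.
  have := M_mul Hy3 (idpow_pow b Hs).
  by have -> : (p + (k - b) + b = p + k)%N by lia.
- have Hy' : idpow L' ((p + k).+1 - b + (b - k)) (y * s ^+ (b - k)).
    by apply: idpow_mul; [apply: (idpow_mono HLL')|apply: idpow_pow].
  have := M_mul Hsk Hy'.
  have -> : (k.-1 + ((p + k).+1 - b + (b - k)) = p + k)%N by lia.
  have -> : s ^+ k * (y * s ^+ (b - k)) = y * s ^+ b.
    by rewrite mulrCA -exprD subnKC.
  by [].
Qed.

From Stdlib Require Import ClassicalEpsilon.

Lemma build {R : comNzRingType} (I J : R -> Prop) (sl : seq R) :
  is_ideal I -> is_ideal J -> subideal I J ->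
  (forall r, r \in sl -> J r /\ int_closure I r) ->
  exists L, [/\ is_ideal L, subideal I L, subideal L J, (forall r, r \in sl -> L r) &
     exists p, subideal (idpow L p.+1) (mulid (idpow L p) I)].
Proof.
move=> HI HJ HIJ; elim: sl => [|s sl IH] Hsl.
  by exists I; split => //; exists 0%N.
have [L [HL HIL HLJ HslL [p Hp]]] : exists L, [/\ is_ideal L, subideal I L, subideal L J,
   (forall r, r \in sl -> L r) &
     exists p, subideal (idpow L p.+1) (mulid (idpow L p) I)].
  by apply: IH => r Hr; apply: Hsl; rewrite inE Hr orbT.
have [HsJ [k [a [Hk [Ha Heq]]]]] := Hsl s (mem_head _ _).
exists (ext L s); split.
- exact: ext_ideal.
- by move=> y Hy; apply: ext_sub => //; apply: HIL.
- move=> y [l [t [Hl ->]]]; apply: idD => //; first by apply: HLJ.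
  exact: idM.
- move=> r; rewrite inE => /orP [/eqP ->|Hr]; first exact: ext_s.
  by apply: ext_sub => //; apply: HslL.
- by exists (p + k)%N; exact: (step HL HIL Hk Ha Heq Hp).
Qed.

Lemma Jpow {R : comNzRingType} (I J : R -> Prop) p :
  is_ideal I -> subideal (idpow J p.+1) (mulid (idpow J p) I) ->
  forall c, subideal (idpow J (p.+1 + c)) (mulid (idpow J p) (idpow I c.+1)).
Proof.
move=> HI HJ; elim=> [|c IH].
  rewrite addn0 => r Hr; apply: (mulid_mono _ _ (HJ _ Hr)) => // y Hy.
  by apply/(idpow1 _ HI).
rewrite addnS; apply: gen_sub; first exact: gen_ideal.
move=> r [w [d [Hw [Hd ->]]]].
apply: (gen_ext_l (T := mulid (idpow J p) (idpow I c.+2)) (B := J) (gen_ideal _) _ (IH _ Hw) Hd).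
move=> u' d' [u [v [Hu [Hv ->]]]] Hd'.
have -> : u * v * d' = (u * d') * v by ring.
apply: (gen_ext_l (T := mulid (idpow J p) (idpow I c.+2)) (B := idpow I c.+1) (gen_ideal _) _ (HJ _ (idpowS Hu Hd')) Hv).
move=> u2 v2 [e [i [He [Hi ->]]]] Hv2.
have -> : e * i * v2 = e * (v2 * i) by ring.
by apply: mulid_in => //; apply: idpowS.
Qed.

Definition xmul {R : comNzRingType} (x : R) (A : R -> Prop) : R -> Prop :=
  fun r => exists z, A z /\ r = x * z.

Lemma xmul_ideal {R : comNzRingType} (x : R) A : is_ideal A -> is_ideal (xmul x A).
Proof.
move=> HA; split.
- by exists 0; split; [apply: id0|rewrite mulr0].
- by move=> a b [z1 [H1 ->]] [z2 [H2 ->]]; exists (z1 + z2); split; [apply: idD|rewrite mulrDr].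
- by move=> r a [z1 [H1 ->]]; exists (r * z1); split; [apply: idM|rewrite mulrCA].
Qed.

Lemma shiftX {R : comNzRingType} (x : R) (J : R -> Prop) N :
  subideal (idpow J N.+1) (xmul x (idpow J N)) ->
  subideal (idpow J N.+2) (xmul x (idpow J N.+1)).
Proof.
move=> H; apply: gen_sub; first by apply: xmul_ideal; apply: idpow_ideal.
move=> r [a [b [Ha [Hb ->]]]].
have [z [Hz ->]] := H _ Ha.
by exists (z * b); split; [apply: idpowS|rewrite mulrA].
Qed.

Lemma nzd_pow {R : comNzRingType} (y : R) n : nzd y -> nzd (y ^+ n).
Proof.
move=> Hy; elim: n => [|n IH] v; first by rewrite expr0 mul1r.
rewrite exprS => E; apply: Hy; apply: IH; rewrite -E; ring.
Qed.

Lemma trace_colon {R : comNzRingType} (T : R -> Prop) a s :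
  is_ideal T -> trace_ideal T -> nzd s ->
  (forall y, T y -> exists z, a * y = s * z) ->
  forall y, T y -> exists z, T z /\ a * y = s * z.
Proof.
move=> HT [N HN] Hs H.
have Hx : is_ideal (fun r => exists z, T z /\ a * r = s * z).
  split.
  - by exists 0; split; [apply: id0|rewrite !mulr0].
  - move=> u v [z1 [H1 E1]] [z2 [H2 E2]]; exists (z1 + z2).
    by split; [apply: idD|rewrite !mulrDr E1 E2].
  - move=> r u [z1 [H1 E1]]; exists (r * z1).
    by split; [apply: idM|rewrite mulrCA E1 mulrCA].
move=> y /HN Hy; apply: (gen_sub Hx _ Hy) => _ [f [n ->]].
have Hfn : forall n, exists z, a * f n = s * z.
  move=> n'; apply: H; apply/HN; apply: gen_in; by exists f, n'.
pose g := fun n => proj1_sig (constructive_indefinite_description _ (Hfn n)).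
have Hg : forall n, a * f n = s * g n.
  by move=> n'; rewrite /g; case: constructive_indefinite_description.
have lg : linear (g : N -> R^o).
  move=> c u v /=; apply/eqP; rewrite -subr_eq0; apply/eqP; apply: Hs.
  rewrite mulrBr -Hg linearP /= mulrDr !mulrDr -!Hg.
  rewrite /GRing.scale /= [s * (c * _)]mulrCA -Hg; ring.
pose gl : {linear N -> R^o} := HB.pack (g : N -> R^o) (GRing.isLinear.Build R N R^o _ _ lg).
exists (g n); split; last exact: Hg.
by apply/HN; apply: gen_in; exists gl, n.
Qed.

Theorem lemma6p3 (R : comNzRingType) (m : R -> Prop)
  (I J : R -> Prop) (x : R) :
  CM_local m -> krull_dim_eq R 1 ->
  is_ideal I -> regular_ideal I -> trace_ideal I -> principal_reduction x I ->
  is_ideal J -> trace_ideal J -> subideal I J -> subideal J (int_closure I) ->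
  stable J ->
  same_ideal I J.
Proof.
move=> [Hnoeth _] _ HI [y0 [Hy0I Hy0]] HtrI [HxI [n Hn]] HJ _ HIJ HJcl Hstab.
have Hxnzd : nzd x.
  move=> v Hv.
  have [w [_ Ew]] := proj1 (Hn _) (idpow_pow n.+1 Hy0I).
  apply: (@nzd_pow _ y0 n.+1 Hy0).
  by rewrite Ew mulrAC Hv mul0r.
have [sl Hsl] := Hnoeth J HJ.
have Hsl' : forall r, r \in sl -> J r /\ int_closure I r.
  move=> r Hr; have HJr : J r by apply/Hsl; apply: gen_in.
  by split => //; apply: HJcl.
have [L [HL HIL HLJ HslL [p Hp]]] := build HI HJ HIJ Hsl'.
have JL : subideal J L.
  by move=> r /Hsl Hr; exact: (gen_sub HL HslL Hr).
have HpJ : subideal (idpow J p.+1) (mulid (idpow J p) I).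
  move=> r /(idpow_mono JL) /Hp; apply: mulid_mono => //.
  exact: idpow_mono.
have HJX : subideal (idpow J (p + n).+1) (xmul x (idpow J (p + n))).
  move=> r Hr; rewrite -addSn in Hr; have := Jpow HI HpJ Hr.
  apply: gen_sub; first by apply: xmul_ideal; apply: idpow_ideal.
  move=> _ [u [v [Hu [Hv ->]]]].
  have [w [Hw ->]] := proj1 (Hn _) Hv.
  exists (u * w); split; last by rewrite mulrCA.
  by apply: idpow_mul => //; apply: (idpow_mono HIJ).
have HJX' := shiftX HJX.
move=> j; split; first exact: HIJ.
move=> Hj.
have Hcol : colon_frac J (p + n).+1 j x.
  move=> y Hy; have [z [Hz E]] := HJX' _ (idpowS Hy Hj).
  by exists z; split => //; rewrite mulrC.
have Hc1 : colon_frac J 1 j x.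
  by apply: (proj1 (Hstab j x Hxnzd)); exists (p + n).+1.
have Hcol0 : forall i, I i -> exists z, j * i = x * z.
  move=> i Hi; have [z [_ E]] := Hc1 i (proj1 (idpow1 _ HJ) (HIJ _ Hi)).
  by exists z.
have [z [Hz E]] := trace_colon HI HtrI Hxnzd Hcol0 HxI.
have : x * (j - z) = 0 by rewrite mulrBr -E mulrC subrr.
by move/Hxnzd/eqP; rewrite subr_eq0 => /eqP ->.
Qed.
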